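(* Let $0<s<1$ and let $\{\gamma_j\}_{j\in\mathbb N}$ be a non-increasing sequence with $1\ge\gamma_1$, $\gamma_j>0$ for all $j$, and $\lim_{j\to\infty}\gamma_j=0$. Then $$\lim_{\varepsilon\to0}\frac{d(\varepsilon)^{1-s}}{(\ln\varepsilon^{-1})^{s}}=0\quad\text{if and only if}\quad \lim_{j\to\infty}\frac{(\ln\frac1{\gamma_j})^{s}}{j^{1-s}}=\infty.$$
   Context: For $\varepsilon\in(0,1)$, $d(\varepsilon)=\max\{d\in\mathbb N:\gamma_d>\varepsilon^2\}$, with $d(\varepsilon)=0$ if $\gamma_1\le\varepsilon^2$. *)

(* Defs.v *)
From HB Require Import structures.
From mathcomp Require Import all_boot all_order all_algebra.
From mathcomp Require Import all_classical all_reals all_analysis.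
Set Implicit Arguments. Unset Strict Implicit. Unset Printing Implicit Defensive.
Import Order.TTheory GRing.Theory Num.Theory.
Local Open Scope ring_scope.
Local Open Scope classical_set_scope.

(* The sequence gamma is indexed by j >= 1; the value gamma 0 is ignored. *)

Definition is_d (R : realType) (gamma : nat -> R) (eps : R) (d : nat) : Prop :=
  ((d = 0)%N /\ gamma 1%N <= eps ^+ 2)
  \/ ((1 <= d)%N /\ eps ^+ 2 < gamma d /\
      (forall d' : nat, (1 <= d')%N -> eps ^+ 2 < gamma d' -> (d' <= d)%N)).

(* d(eps): the (unique, under the paper's hypotheses) d with [is_d gamma eps d];
   defaults to 0 if no such d exists. *)
Definition d_eps (R : realType) (gamma : nat -> R) (eps : R) : nat :=
  match pselect (exists d, is_d gamma eps d) with
  | left H => projT1 (cid H)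
  | right _ => 0%N
  end.

(* Main.v *)
Require Import Defs.
From HB Require Import structures.
From mathcomp Require Import all_boot all_order all_algebra.
From mathcomp Require Import all_classical all_reals all_analysis.
From mathcomp Require Import lra.
Import Order.TTheory GRing.Theory Num.Theory.
Local Open Scope ring_scope.
Local Open Scope classical_set_scope.

Lemma gamma_mono (R : realType) (gamma : nat -> R) :
  (forall j : nat, (1 <= j)%N -> gamma j.+1 <= gamma j) ->
  forall i j, (1 <= i)%N -> (i <= j)%N -> gamma j <= gamma i.
Proof.
move=> mono i j i1 /subnK <-; elim: (j - i)%N => [|k IH]; first by rewrite add0n.
rewrite addSn; apply: le_trans IH; apply: mono.
by rewrite (leq_trans i1) // leq_addl.
Qed.

Lemma d_exists (R : realType) (gamma : nat -> R) (eps : R) :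
  gamma @ \oo --> 0 -> 0 < eps -> exists d, is_d gamma eps d.
Proof.
move=> gcvg eps0.
have e20 : 0 < eps ^+ 2 by rewrite exprn_gt0.
have /cvgr_dist_lt /(_ _ e20) [N _ HN] := gcvg.
case: (lerP (gamma 1%N) (eps ^+ 2)) => H1; first by exists 0%N; left.
pose P := fun d : nat => (1 <= d)%N && (eps ^+ 2 < gamma d).
have exP : exists i, P i by exists 1%N; rewrite /P H1.
have ubP : forall i, P i -> (i <= N)%N.
  move=> i /andP[_ Hi]; case: (leqP i N) => // /ltnW Ni.
  have := HN i Ni; rewrite sub0r normrN => Habs.
  have := le_lt_trans (ler_norm (gamma i)) Habs; rewrite ltNge (ltW Hi) //.
case: (ex_maxnP exP ubP) => d /andP[d1 Hd] Hmax.
exists d; right; split => //; split => // d' d'1 Hd'.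
by apply: Hmax; rewrite /P d'1 Hd'.
Qed.

Lemma d_prop (R : realType) (gamma : nat -> R) (eps : R) :
  (forall j : nat, (1 <= j)%N -> gamma j.+1 <= gamma j) ->
  gamma @ \oo --> 0 -> 0 < eps ->
  (forall j, (1 <= j)%N -> eps ^+ 2 < gamma j -> (j <= d_eps gamma eps)%N) /\
  ((1 <= d_eps gamma eps)%N -> eps ^+ 2 < gamma (d_eps gamma eps)).
Proof.
move=> mono gcvg eps0; rewrite /d_eps; case: pselect => [H|nH]; last first.
  by exfalso; apply: nH; apply: d_exists.
case: (cid H) => d /= [[-> H1]|[d1 [Hd Hmax]]]; split => //.
move=> j j1 Hj; exfalso.
have := le_lt_trans H1 (lt_le_trans Hj (@gamma_mono _ _ mono _ _ (leqnn 1) j1)).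
by rewrite ltxx.
Qed.

Theorem lemma3 (R : realType) (s : R) (gamma : nat -> R) :
  0 < s -> s < 1 ->
  (forall j : nat, (1 <= j)%N -> gamma j.+1 <= gamma j) ->
  gamma 1%N <= 1 ->
  (forall j : nat, (1 <= j)%N -> 0 < gamma j) ->
  gamma @ \oo --> 0 ->
  ((fun eps : R => ((d_eps gamma eps)%:R `^ (1 - s)) / (ln eps^-1 `^ s))
      @ 0^'+ --> 0)
  <->
  ((fun j : nat => (ln (gamma j)^-1 `^ s) / (j%:R `^ (1 - s))) @ \oo --> +oo).
Proof.
move=> s0 s1 mono g1 gpos gcvg.
have s1ge0 : 0 <= 1 - s by lra.
split.
- move=> /cvgr0Pnorm_lt HA; apply/cvgryPge => M.
  pose M' := Num.max M 1.
  have M'0 : 0 < M' by rewrite lt_max ltr01 orbT.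
  have [δ δ0 Hδ] := HA (M'^-1) ltac:(by rewrite invr_gt0).
  have Hδ' : forall e, 0 < e -> e < δ -> `|(d_eps gamma e)%:R `^ (1 - s) / ln e^-1 `^ s| < M'^-1.
    by move=> e e0 ed; apply: Hδ => //=; rewrite sub0r normrN gtr0_norm.
  have c0 : 0 < Num.min δ 1 by rewrite lt_min δ0 ltr01.
  have /cvgr_dist_lt /(_ _ c0) [N _ HN] := gcvg.
  exists (maxn N 1) => // j /=; rewrite geq_max => /andP[Nj j1].
  have gj0 := gpos j j1.
  have := HN j Nj; rewrite sub0r normrN gtr0_norm // lt_min => /andP[gjd gj1].
  have [Hd1 _] := @d_prop _ _ _ mono gcvg gj0.
  have jd : (j <= d_eps gamma (gamma j))%N by apply: Hd1 => //; nra.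
  have HF := Hδ' _ gj0 gjd.
  have L0 : 0 < ln (gamma j)^-1 by apply: ln_gt0; rewrite invf_gt1.
  have a0 : 0 < j%:R `^ (1 - s) by apply: powR_gt0; rewrite ltr0n.
  have b0 : 0 < ln (gamma j)^-1 `^ s by apply: powR_gt0.
  have ad : j%:R `^ (1 - s) <= (d_eps gamma (gamma j))%:R `^ (1 - s).
    by apply: ge0_ler_powR => //; rewrite ?nnegrE ?ler0n ?ler_nat.
  rewrite ger0_norm in HF; last by rewrite divr_ge0 // powR_ge0.
  have HF2 : j%:R `^ (1 - s) / ln (gamma j)^-1 `^ s < M'^-1.
    apply: le_lt_trans HF; rewrite ler_pM2r ?invr_gt0 //.
  rewrite ltr_pdivrMr // in HF2.
  have HM : M <= M' by rewrite le_max lexx.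
  apply: (le_trans HM); rewrite ler_pdivlMr //.
  have : M' * (j%:R `^ (1 - s)) < M' * (M'^-1 * ln (gamma j)^-1 `^ s).
    by rewrite ltr_pM2l.
  rewrite mulrA mulfV ?gt_eqF // mul1r; exact: ltW.
- move=> /cvgryPge HB; apply/cvgr0Pnorm_lt => e e0.
  pose c := (2 : R) `^ s.
  have c0 : 0 < c by apply: powR_gt0.
  have [N _ HN] := HB (c * 2 / e).
  pose N' := maxn N 1.
  have N'1 : (1 <= N')%N by rewrite leq_maxr.
  have gN0 := gpos N' N'1.
  have δ0 : 0 < Num.min (gamma N') 1 by rewrite lt_min gN0 ltr01.
  near=> eps.
  have eps0 : 0 < eps by near: eps; exact: nbhs_right_gt.
  have epsd : eps < Num.min (gamma N') 1 by near: eps; exact: nbhs_right_lt.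
  move: epsd; rewrite lt_min => /andP[epsg eps1].
  have [Hd1 Hd2] := @d_prop _ _ _ mono gcvg eps0.
  set d := d_eps gamma eps in Hd1 Hd2 *.
  have N'd : (N' <= d)%N by apply: Hd1 => //; nra.
  have d1 : (1 <= d)%N := leq_trans N'1 N'd.
  have Nd : (N <= d)%N by apply: leq_trans N'd; rewrite leq_maxl.
  have gd := Hd2 d1.
  have gd0 : 0 < gamma d by apply: gpos.
  have gd1 : gamma d <= 1 := le_trans (@gamma_mono _ _ mono _ _ (leqnn 1) d1) g1.
  have g0 : 0 <= ln (gamma d)^-1 by apply: ln_ge0; rewrite invf_ge1.
  have L0 : 0 < ln eps^-1 by apply: ln_gt0; rewrite invf_gt1.
  have gL : ln (gamma d)^-1 <= 2 * ln eps^-1.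
    rewrite !lnV ?posrE //.
    have : ln (eps ^+ 2) < ln (gamma d) by rewrite ltr_ln ?posrE ?exprn_gt0.
    rewrite lnXn // mulr2n; lra.
  have a0 : 0 < d%:R `^ (1 - s) by apply: powR_gt0; rewrite ltr0n.
  have HNd := HN d Nd; rewrite /= ler_pdivlMr // in HNd.
  have Hb : ln (gamma d)^-1 `^ s <= c * ln eps^-1 `^ s.
    rewrite /c -powRM ?(ltW L0) //.
    by apply: ge0_ler_powR; rewrite ?(ltW s0) ?nnegrE ?mulr_ge0 ?(ltW L0).
  have H1 := le_trans HNd Hb.
  rewrite -!mulrA in H1; rewrite ler_pM2l // in H1.
  have H2 : e * (2 / e * d%:R `^ (1 - s)) <= e * ln eps^-1 `^ s.
    by rewrite ler_pM2l // -mulrA.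
  rewrite mulrA mulrCA mulfV ?gt_eqF // mulr1 in H2.
  rewrite ger0_norm; last by rewrite divr_ge0 // powR_ge0.
  rewrite ltr_pdivrMr; last by apply: powR_gt0.
  lra.
Unshelve. all: by end_near.
Qed.
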